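(* Let $V$ be a finite set and let $X$ be a real vector indexed by all subsets of $V$. Then $X$ satisfies $$\sum_{T\subseteq R}(-1)^{|R\setminus T|}X(T\cup Z)\le\begin{cases}1&\text{if }|R|=1,\\0&\text{otherwise,}\end{cases}\qquad\text{for all nonempty }R\subseteq V\text{ and all }Z\subseteq V\text{ with }Z\cap R=\emptyset,$$ if and only if it satisfies $$\sum_{T\subseteq R}(-1)^{|T|}\big(X(R\setminus T)-|R\setminus T|\big)\le0\qquad\text{for all nonempty }R\subseteq V.$$ *)

(* Defs.v *)
From mathcomp Require Import all_boot all_order all_algebra.

(* Main.v *)
Require Import Defs.
From mathcomp Require Import all_boot all_order all_algebra.
Import Order.TTheory GRing.Theory Num.Theory.
Local Open Scope ring_scope.

Section Aux.
Variables (R : realFieldType) (V : finType).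

Lemma sum_subset_add (F : {set V} -> R) (z : V) (S : {set V}) : z \notin S ->
  \sum_(T : {set V} | T \subset z |: S) F T =
  \sum_(T : {set V} | T \subset S) F T + \sum_(T : {set V} | T \subset S) F (z |: T).
Proof.
move=> zS; rewrite (bigID (fun T : {set V} => z \in T)) /= addrC; congr (_ + _).
  apply: eq_bigl => T; apply/andP/idP.
    move=> [/subsetP sub zT]; apply/subsetP => x xT.
    by move: (sub x xT); rewrite !inE; case/orP=> // /eqP ex; rewrite -ex xT in zT.
  move=> TS; split; last by apply: contra zS; apply/subsetP.
  by apply: (subset_trans TS); apply/subsetP => x; rewrite !inE orbC => ->.
rewrite (reindex_onto (fun T => z |: T) (fun T => T :\ z)) /=; last first.
  by move=> T /andP[_ zT]; rewrite setD1K.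
apply: eq_bigl => T; apply/andP/idP.
  move=> [/andP[/subsetP sub _] /eqP e]; apply/subsetP => x xT.
  have xz : x != z.
    by apply/eqP => ex; move: xT; rewrite -e ex !inE eqxx.
  by move: (sub x); rewrite !inE xT orbT (negbTE xz) /=; apply.
move=> TS; have zT : z \notin T by apply: contra zS; apply/subsetP.
rewrite setU1K // eqxx setU11 andbT; split=> //.
by apply: setUS.
Qed.

Definition alt (G : {set V} -> R) (S : {set V}) :=
  \sum_(T : {set V} | T \subset S) (-1) ^+ #|S :\: T| * G T.

Lemma alt_split G (z : V) (S : {set V}) : z \notin S ->
  alt G (z |: S) = alt (fun T => G (z |: T)) S - alt G S.
Proof.
move=> zS; rewrite /alt sum_subset_add // addrC -sumrN; congr (_ + _).
  apply: eq_bigr => T TS.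
  have -> : (z |: S) :\: (z |: T) = S :\: T.
    apply/setP => x; rewrite !inE; case: (x =P z) => [->|_] /=; last by [].
    by rewrite (negbTE zS) andbF.
  by [].
apply: eq_bigr => T TS.
have zT : z \notin T by apply: contra zS; apply/subsetP.
have zS0 : (z \in S) = false by apply/negbTE.
have -> : (z |: S) :\: T = z |: (S :\: T).
  apply/setP => x; rewrite !inE; case: (x =P z) => [->|_] /=; last by [].
  by rewrite zT.
by rewrite cardsU1 !inE (negbTE zS) andbF /= exprS mulN1r mulNr.
Qed.

Lemma set_ind (P : {set V} -> Prop) : P set0 ->
  (forall (z : V) (S : {set V}), z \notin S -> P S -> P (z |: S)) -> forall S, P S.
Proof.
move=> P0 Pstep S; move: {2}#|S| (erefl #|S|) => n; elim: n S => [|n IH] S cS.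
  by move/eqP: cS; rewrite cards_eq0 => /eqP ->.
have : S != set0 by rewrite -card_gt0 cS.
case/set0Pn => z zS; rewrite -(setD1K zS); apply: Pstep; first by rewrite !inE eqxx.
by apply: IH; move: cS; rewrite (cardsD1 z S) zS add1n => -[].
Qed.

Lemma alt_one (S : {set V}) : alt (fun _ => 1) S = (S == set0)%:R.
Proof.
elim/set_ind: S => [|z S zS IH].
  rewrite /alt (big_pred1 set0) ?eqxx ?setD0 ?cards0 ?expr0 ?mulr1 //.
  by move=> T; rewrite subset0.
rewrite alt_split // IH; have -> : (z |: S == set0) = false.
  by apply/negbTE/set0Pn; exists z; rewrite setU11.
by rewrite subrr.
Qed.

Lemma alt_card (S : {set V}) : alt (fun T => #|T|%:R) S = (#|S| == 1%N)%:R.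
Proof.
elim/set_ind: S => [|z S zS IH].
  rewrite /alt (big_pred1 set0) ?cards0 ?mulr0 //.
  by move=> T; rewrite subset0.
rewrite alt_split //.
have -> : alt (fun T => #|z |: T|%:R) S = alt (fun T => #|T|%:R + 1) S.
  rewrite /alt; apply: eq_bigr => T TS.
  have zT : z \notin T by apply: contra zS; apply/subsetP.
  by rewrite cardsU1 zT add1n -natr1.
have -> : alt (fun T => #|T|%:R + 1) S = alt (fun T => #|T|%:R) S + alt (fun _ => 1) S.
  by rewrite /alt -big_split /=; apply: eq_bigr => T _; rewrite mulrDr.
rewrite alt_one addrAC subrr add0r cardsU1 zS add1n eqSS cards_eq0.
by [].
Qed.

Lemma g_alt (X : {set V} -> R) (S : {set V}) :
  \sum_(T : {set V} | T \subset S) (-1) ^+ #|T| * (X (S :\: T) - #|S :\: T|%:R)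
  = alt X S - (#|S| == 1%N)%:R.
Proof.
rewrite -alt_card /alt -sumrB.
rewrite (reindex_onto (fun U => S :\: U) (fun U => S :\: U)) /=; last first.
  by move=> T TS; rewrite setDDr setDv set0U; apply/setIidPr.
apply: eq_big => U.
  apply/andP/idP => [[_ /eqP e]|US].
    by rewrite -e subsetDl.
  by rewrite subsetDl setDDr setDv set0U (setIidPr US) eqxx.
by move=> /andP[_ /eqP ->]; rewrite mulrBr.
Qed.

End Aux.
Arguments alt {R V}.
Arguments alt_split {R V}.

Theorem lemma6p1 (R : realFieldType) (V : finType) (X : {set V} -> R) :
  (forall (S Z : {set V}), S != set0 -> Z :&: S = set0 ->
     \sum_(T : {set V} | T \subset S) (-1) ^+ #|S :\: T| * X (T :|: Z)
       <= (if #|S| == 1%N then 1 else 0))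
  <->
  (forall S : {set V}, S != set0 ->
     \sum_(T : {set V} | T \subset S)
        (-1) ^+ #|T| * (X (S :\: T) - #|S :\: T|%:R) <= 0).
Proof.
have E : forall S, alt X S = \sum_(T : {set V} | T \subset S) (-1) ^+ #|S :\: T| * X (T :|: set0).
  by move=> S; apply: eq_bigr => T _; rewrite setU0.
split.
  move=> H S S0; rewrite g_alt subr_le0 E.
  by apply: le_trans (H S set0 S0 (set0I S)) _; case: (_ == _).
move=> H S Z S0 ZS.
suff: alt (fun T => X (T :|: Z)) S <= (#|S| == 1%N)%:R by case: (_ == _).
elim/set_ind: Z S S0 ZS => [|z Z zZ IH] S S0 ZS.
  have -> : alt (fun T => X (T :|: set0)) S = alt X S by rewrite E.
  by rewrite -subr_le0 -g_alt; apply: H.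
have zS : z \notin S.
  by apply/negP => zS; move/setP: ZS => /(_ z); rewrite !inE eqxx zS.
have ZS' : Z :&: S = set0.
  apply/eqP; rewrite -subset0 -ZS; apply: setSI; apply/subsetP => x xZ.
  by rewrite !inE xZ orbT.
have e := alt_split (fun T => X (T :|: Z)) z S zS.
have -> : alt (fun T => X (T :|: (z |: Z))) S = alt (fun T => X ((z |: T) :|: Z)) S.
  by rewrite /alt; apply: eq_bigr => T _ /=; rewrite setUA [T :|: _]setUC.
have -> : alt (fun T => X ((z |: T) :|: Z)) S =
  alt (fun T => X (T :|: Z)) (z |: S) + alt (fun T => X (T :|: Z)) S.
  by rewrite e subrK.
have h1 := IH S S0 ZS'.
have S1 : z |: S != set0 by apply/set0Pn; exists z; rewrite setU11.
have ZS1 : Z :&: (z |: S) = set0.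
  apply/setP => x; move/setP: ZS => /(_ x); rewrite !inE.
  case: (x =P z) => [->|_] /= h; first by rewrite (negbTE zZ).
  exact: h.
have h2 := IH _ S1 ZS1.
have e1 : (#|z |: S| == 1%N) = false.
  rewrite cardsU1 zS add1n eqSS cards_eq0; exact: negbTE.
rewrite e1 in h2.
by rewrite -[X in _ <= X]add0r lerD.
Qed.
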